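(* Let $J\in\mathcal{D}(X)$ and, for each $x\in X$, let $\bar U(x)\subset U(x)$ be such that $(\bar TJ)(x)\le J(x)$ for all $x\in X$, where $(\bar TJ')(x)=\inf_{u\in\bar U(x)}\{g(x,u)+J'(f(x,u))\}$ for $J'\in\mathcal{E}^+(X)$. Then $\bar T^\ell J\in\mathcal{D}(X)$ for every positive integer $\ell$, where $\bar T^\ell$ denotes the $\ell$-fold composition of $\bar T$.
   Context: Setting: $X$ (state space) and $U$ (control space) are sets; for each $x\in X$, $U(x)\subset U$ is nonempty; $f:X\times U\to X$; the stage cost $g$ satisfies $0\le g(x,u)\le\infty$ for all $x\in X$, $u\in U(x)$. $\mathcal{E}^+(X)$ denotes the set of all functions $J:X\to[0,\infty]$. The Bellman operator is $(TJ)(x)=\inf_{u\in U(x)}\{g(x,u)+J(f(x,u))\}$. The region of decreasing is $\mathcal{D}(X)=\{J\in\mathcal{E}^+(X): (TJ)(x)\le J(x)\ \forall x\in X\}$. Standing assumption: for every $J\in\mathcal{E}^+(X)$ and every $x\in X$, the infimum defining $(TJ)(x)$ is attained. *)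

(* Defs.v *)
From mathcomp Require Import all_boot all_order all_algebra.
From mathcomp Require Import all_classical all_reals ereal.
Set Implicit Arguments. Unset Strict Implicit. Unset Printing Implicit Defensive.
Import Order.TTheory GRing.Theory Num.Theory.
Local Open Scope classical_set_scope.
Local Open Scope ereal_scope.

Definition Eplus (R : realType) (X : Type) (J : X -> \bar R) : Prop :=
  forall x, 0 <= J x.

Definition Top (R : realType) (X U : Type) (Uc : X -> set U)
  (f : X -> U -> X) (g : X -> U -> \bar R) (J : X -> \bar R) : X -> \bar R :=
  fun x => ereal_inf [set g x u + J (f x u) | u in Uc x].

Definition Dreg (R : realType) (X U : Type) (Uc : X -> set U)
  (f : X -> U -> X) (g : X -> U -> \bar R) (J : X -> \bar R) : Prop :=
  Eplus J /\ forall x, Top Uc f g J x <= J x.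

Definition inf_attained (R : realType) (X U : Type) (Uc : X -> set U)
  (f : X -> U -> X) (g : X -> U -> \bar R) : Prop :=
  forall J : X -> \bar R, Eplus J -> forall x,
    exists2 u, Uc x u & Top Uc f g J x = g x u + J (f x u).

(* Main.v *)
Require Import Defs.
From mathcomp Require Import all_boot all_order all_algebra.
From mathcomp Require Import all_classical all_reals ereal.
Import Order.TTheory GRing.Theory Num.Theory.
Local Open Scope classical_set_scope.
Local Open Scope ereal_scope.

Lemma Top_mono (R : realType) (X U : Type) (S S' : X -> set U)
  (f : X -> U -> X) (g : X -> U -> \bar R) (J1 J2 : X -> \bar R) :
  (forall x, S' x `<=` S x) -> (forall x, J1 x <= J2 x) ->
  forall x, Top S f g J1 x <= Top S' f g J2 x.
Proof.
move=> hS hJ x; rewrite /Top; apply: le_ereal_inf_tmp => _ [u Su <-].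
apply: ge_ereal_inf; exists (g x u + J1 (f x u)).
  by exists u => //; apply: hS.
by apply: leeD2l.
Qed.

Theorem corollary4 (R : realType) (X U : Type) (Uc : X -> set U)
  (f : X -> U -> X) (g : X -> U -> \bar R)
  (HU : forall x, Uc x !=set0)
  (Hg : forall x u, Uc x u -> 0 <= g x u)
  (Hatt : inf_attained Uc f g)
  (J : X -> \bar R) (HJ : Dreg Uc f g J)
  (Ub : X -> set U) (HUb : forall x, Ub x `<=` Uc x)
  (HTb : forall x, Top Ub f g J x <= J x) :
  forall l : nat, (0 < l)%N -> Dreg Uc f g (iter l (Top Ub f g) J).
Proof.
have key : forall l, Eplus (iter l (Top Ub f g) J) /\
    forall x, iter l.+1 (Top Ub f g) J x <= iter l (Top Ub f g) J x.
  case: HJ => HJ1 HJ2.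
  elim=> [|l [IH1 IH2]]; first by split.
  split.
    move=> x /=; apply: le_ereal_inf_tmp => _ [u Su <-].
    by apply: adde_ge0; [exact: (Hg _ _ (HUb _ _ Su)) | exact: IH1].
  move=> x; exact: (@Top_mono R X U Ub Ub f g (iter l.+1 (Top Ub f g) J) (iter l (Top Ub f g) J) (fun _ _ h => h) IH2 x).
move=> l _; have [h1 h2] := key l; split => // x.
apply: le_trans (h2 x); exact: (@Top_mono R X U Uc Ub f g (iter l (Top Ub f g) J) (iter l (Top Ub f g) J) HUb (fun _ => lexx _) x).
Qed.
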